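(* Let $U,V$ be Hopf algebras with bijective antipodes, $\langle\,,\rangle:U\otimes V\to k$ a pairing, and let $\gamma:V\to U^{\rm cop}$ be a Hopf algebra map satisfying $\gamma(y)m=\langle S_U^{-1}(m_1),y_3\rangle\langle m_3,y_1\rangle\, m_2\gamma(y_2)$ for all $y\in V$, $m\in U$. Then: (i) The functional $\vartheta\in V^*$, $\vartheta(x)=\langle\gamma(x_1),S_V(x_2)\rangle$, is convolution invertible with inverse $\vartheta^{-1}(x)=\langle\gamma(S_V^2(x_1)),x_2\rangle$, and for all $x\in V$, $\gamma(S_V^2(x))=\vartheta^{-1}(x_1)\gamma(x_2)\vartheta(x_3)$. (ii) The functional $\upsilon\in V^*$, $\upsilon(x)=\langle\gamma(x_2),S_V(x_1)\rangle$, is convolution invertible with inverse $\upsilon^{-1}(x)=\langle\gamma(S_V^2(x_2)),x_1\rangle$, and for all $x\in V$, $\gamma(S_V^2(x))=\upsilon(x_1)\gamma(x_2)\upsilon^{-1}(x_3)$.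
   Context: Sweedler notation, subscripts referring to comultiplication in $U$ and $V$. A pairing satisfies $\langle mn,x\rangle=\langle m,x_1\rangle\langle n,x_2\rangle$, $\langle m,xy\rangle=\langle m_1,x\rangle\langle m_2,y\rangle$, $\langle 1,x\rangle=\varepsilon(x)$, $\langle m,1\rangle=\varepsilon(m)$. $U^{\rm cop}$ denotes $U$ with opposite comultiplication (antipode $S_U^{-1}$); products $\gamma(\cdot)\gamma(\cdot)$ are taken in $U$. *)

(* Defs.v *)
(* Hopf algebras over a field k, with comultiplication given
   by an explicit representative in Sweedler form (a finite list of simple
   tensors); all tensor identities are stated via multilinear forms to k,
   which detect equality in tensor products of vector spaces over a field. *)
From mathcomp Require Import all_boot all_order all_algebra.
Set Implicit Arguments. Unset Strict Implicit. Unset Printing Implicit Defensive.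
Import GRing.Theory.
Local Open Scope ring_scope.

Definition sw (H : Type) (W : zmodType) (D : H -> seq (H * H)) (x : H)
  (f : H -> H -> W) : W := \sum_(q <- D x) f q.1 q.2.

Definition sw3 (H : Type) (W : zmodType) (D : H -> seq (H * H)) (x : H)
  (f : H -> H -> H -> W) : W := sw D x (fun a c => sw D a (fun a1 a2 => f a1 a2 c)).

Definition lmap (k : fieldType) (X Y : lmodType k) (f : X -> Y) : Prop :=
  forall (a : k) (x y : X), f (a *: x + y) = a *: f x + f y.

Definition linf (k : fieldType) (X : lmodType k) (f : X -> k) : Prop :=
  forall (a : k) (x y : X), f (a *: x + y) = a * f x + f y.
Definition bilinf (k : fieldType) (X Y : lmodType k) (f : X -> Y -> k) : Prop :=
  (forall y, linf (fun x => f x y)) /\ (forall x, linf (f x)).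
Definition trilinf (k : fieldType) (X : lmodType k) (f : X -> X -> X -> k) : Prop :=
  (forall y z, linf (fun x => f x y z)) /\ (forall x z, linf (fun y => f x y z))
  /\ (forall x y, linf (f x y)).

Definition is_hopf (k : fieldType) (H : algType k) (D : H -> seq (H * H))
  (e : H -> k) (S Si : H -> H) : Prop :=
  [/\ (* Delta is a linear map H -> H (x) H *)
      (forall b : H -> H -> k, bilinf b -> linf (fun x => sw D x b)),
      (forall (t : H -> H -> H -> k), trilinf t -> forall x,
         sw D x (fun a c => sw D a (fun a1 a2 => t a1 a2 c))
         = sw D x (fun a c => sw D c (fun c1 c2 => t a c1 c2))),
      linf e /\ (forall x, sw D x (fun a c => e a *: c) = x
                        /\ sw D x (fun a c => e c *: a) = x),
      [/\ (forall b : H -> H -> k, bilinf b -> forall x y,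
             sw D (x * y) b = sw D x (fun x1 x2 => sw D y (fun y1 y2 => b (x1 * y1) (x2 * y2)))),
          (forall b : H -> H -> k, bilinf b -> sw D 1 b = b 1 1),
          (forall x y, e (x * y) = e x * e y) & e 1 = 1] &
      [/\ lmap S,
          (forall x, sw D x (fun a c => S a * c) = e x *: 1
                  /\ sw D x (fun a c => a * S c) = e x *: 1),
          cancel S Si & cancel Si S]].

Definition is_pairing (k : fieldType) (U V : algType k)
  (DU : U -> seq (U * U)) (eU : U -> k) (DV : V -> seq (V * V)) (eV : V -> k)
  (p : U -> V -> k) : Prop :=
  [/\ bilinf p,
      (forall m n x, p (m * n) x = sw DV x (fun x1 x2 => p m x1 * p n x2)),
      (forall m x y, p m (x * y) = sw DU m (fun m1 m2 => p m1 x * p m2 y)),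
      (forall x, p 1 x = eV x) &
      (forall m, p m 1 = eU m)].

(* Hopf algebra map g : V -> U^cop (U with opposite comultiplication,
   antipode SU^-1); products are taken in U. *)
Definition is_hopf_map_cop (k : fieldType) (U V : algType k)
  (DU : U -> seq (U * U)) (eU : U -> k) (SUi : U -> U)
  (DV : V -> seq (V * V)) (eV : V -> k) (SV : V -> V) (g : V -> U) : Prop :=
  [/\ lmap g,
      (forall x y, g (x * y) = g x * g y) /\ g 1 = 1,
      (forall b : U -> U -> k, bilinf b -> forall y,
         sw DU (g y) b = sw DV y (fun y1 y2 => b (g y2) (g y1))),
      (forall y, eU (g y) = eV y) &
      (forall y, g (SV y) = SUi (g y))].

(* Main.v *)
Require Import Defs.
From mathcomp Require Import all_boot all_order all_algebra.
From mathcomp Require Import ring.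
From mathcomp Require boolp classical_sets.
Import GRing.Theory.
Local Open Scope ring_scope.
Set Implicit Arguments. Unset Strict Implicit. Unset Printing Implicit Defensive.

Module SepM.
Import boolp classical_sets.

Section Sep.
Variables (k : fieldType) (X : lmodType k).

Definition goodG (w : X) (G : set (X * k)) :=
  [/\ (forall x a b, G (x,a) -> G (x,b) -> a = b),
      (forall x a y b c, G (x,a) -> G (y,b) -> G (c *: x + y, c * a + b)) &
      G (w, 1)].

Lemma pairE {x y : X} {a b : k} : (x,a) = (y,b) -> x = y /\ a = b.
Proof. by case=> -> ->. Qed.

Lemma goodG0 w G : goodG w G -> G (0, 0).
Proof.
case=> _ hl hb. have := hl _ _ _ _ (-1) hb hb.
by rewrite scaleN1r addNr mulN1r addNr.
Qed.

Lemma exists_sep (w : X) : w != 0 -> exists f : X -> k, linf f /\ f w = 1.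
Proof.
move=> w0.
pose P := fun G : set (X * k) => G = set0 \/ goodG w G.
have [A [PA Amax]] : exists A, P A /\ (forall B, (A `<` B)%classic -> ~ P B).
  apply: Zorn_bigcup => F FP Ftot.
  have [allE|] := pselect (forall G, F G -> G = set0).
    left; apply/seteqP; split => // p [G FG]; by rewrite (allE _ FG).
  move=> /existsNP [G0] /not_implyP [FG0 G0n].
  have goodF : forall G, F G -> forall p, G p -> goodG w G.
    move=> G FG p Gp; case: (FP _ FG) => // G0e; by rewrite G0e in Gp.
  have G0g : goodG w G0 by case: (FP _ FG0).
  right; split.
  - move=> x a b [X1 F1 h1] [X2 F2 h2].
    case: (Ftot _ _ F1 F2) => sub.
    + by case: (goodF _ F2 _ h2) => hf _ _; apply: hf (sub _ h1) h2.
    + by case: (goodF _ F1 _ h1) => hf _ _; apply: hf h1 (sub _ h2).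
  - move=> x a y b c [X1 F1 h1] [X2 F2 h2].
    case: (Ftot _ _ F1 F2) => sub.
    + exists X2 => //. by case: (goodF _ F2 _ h2) => _ hl _; apply: hl (sub _ h1) h2.
    + exists X1 => //. by case: (goodF _ F1 _ h1) => _ hl _; apply: hl h1 (sub _ h2).
  - by exists G0 => //; case: G0g.
have Ag : goodG w A.
  case: PA => // A0; exfalso.
  pose B0 := fun p : X * k => exists c : k, p = (c *: w, c).
  apply: (Amax B0).
    rewrite A0; split; first by move=> ?; rewrite /set0.
    move=> sub; have : B0 (w, 1) by exists 1; rewrite scale1r.
    by move/sub.
  right; split.
  - move=> x a b [c1 e1] [c2 e2]; case: (pairE e1) => ex ea; case: (pairE e2) => ex2 eb.
    subst. move/eqP: ex2; rewrite -subr_eq0 -scalerBl scaler_eq0 (negbTE w0) orbF subr_eq0.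
    by move/eqP.
  - move=> x a y b c [c1 e1] [c2 e2]; case: (pairE e1) => -> ->; case: (pairE e2) => -> ->.
    by exists (c * c1 + c2); rewrite scalerDl scalerA.
  - by exists 1; rewrite scale1r.
case: Ag => Af Al Ab.
have A00 : A (0,0) by apply: (@goodG0 w); split.
have tot : forall x, exists a, A (x, a).
  move=> x0; apply: contrapT => nx.
  have nx' : forall a, ~ A (x0, a) by move=> a hA; apply: nx; exists a.
  pose B := fun p : X * k => exists y a c, A (y, a) /\ p = (y + c *: x0, a).
  apply: (Amax B).
    split.
      move=> [y a] hA; exists y, a, 0; split => //; by rewrite scale0r addr0.
    move=> sub; apply: (nx' 0); apply: sub.
    exists 0, 0, 1; split => //; by rewrite scale1r add0r.
  right; split.
  - move=> x a b [y1 [a1 [c1 [h1 e1]]]] [y2 [a2 [c2 [h2 e2]]]].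
    case: (pairE e1) => ex ea; case: (pairE e2) => ex2 eb; subst.
    have [cc|cn] := eqVneq c1 c2.
      subst; move/addIr: ex2 => ey; subst; exact: Af h1 h2.
    exfalso; apply: (nx' ((c1 - c2)^-1 * (- a1 + a2))).
    have hd := Al _ _ _ _ (-1) h1 h2.
    have hs := Al _ _ _ _ ((c1 - c2)^-1) hd A00.
    move: hs; rewrite !addr0 mulN1r scaleN1r => hs.
    suff -> : x0 = (c1 - c2)^-1 *: (- y1 + y2) by [].
    apply: (@scalerI _ _ (c1 - c2)); first by rewrite subr_eq0.
    rewrite scalerA divff ?subr_eq0 // scale1r scalerBl.
    apply/eqP; rewrite subr_eq -(addKr y1 (c1 *: x0)) ex2.
    by rewrite addrA.
  - move=> x a y b c [y1 [a1 [c1 [h1 e1]]]] [y2 [a2 [c2 [h2 e2]]]].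
    case: (pairE e1) => -> ->; case: (pairE e2) => -> ->.
    exists (c *: y1 + y2), (c * a1 + a2), (c * c1 + c2); split; first exact: Al.
    congr (_, _); rewrite scalerDr scalerA scalerDl.
    by rewrite addrACA.
  - exists w, 1, 0; split => //; by rewrite scale0r addr0.
pose f := fun x => projT1 (cid (tot x)).
have fP : forall x, A (x, f x) by move=> x; rewrite /f; case: (cid _).
exists f; split.
  move=> c x y; apply: Af (fP _) _; exact: Al (fP _) (fP _).
exact: Af (fP _) Ab.
Qed.

Lemma separate (u v : X) : (forall f : X -> k, linf f -> f u = f v) -> u = v.
Proof.
move=> h; apply/eqP; rewrite -subr_eq0; apply/negP => /negP nz.
have [f [lf f1]] := @exists_sep _ nz.
have e : f (u - v) = f u - f v.
  have := lf (-1) v u. by rewrite scaleN1r mulN1r addrC => ->; rewrite addrC.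
by move: f1; rewrite e (h f lf) subrr => /eqP; rewrite eq_sym oner_eq0.
Qed.
End Sep.

End SepM.
Import SepM.

Section Lin.
Variable k : fieldType.

Lemma lf_mull (X : lmodType k) (f : X -> k) (c : k) : linf f -> linf (fun x => f x * c).
Proof. by move=> h a x y; rewrite h mulrDl mulrA. Qed.
Lemma lf_mulr (X : lmodType k) (f : X -> k) (c : k) : linf f -> linf (fun x => c * f x).
Proof. by move=> h a x y; rewrite h mulrDr mulrCA. Qed.
Lemma lf_comp (X Y : lmodType k) (f : Y -> k) (G : X -> Y) : linf f -> lmap G -> linf (fun x => f (G x)).
Proof. by move=> hf hG a x y; rewrite hG hf. Qed.
Lemma lm_id (X : lmodType k) : lmap (fun x : X => x).
Proof. by []. Qed.
Lemma lm_comp (X Y Z : lmodType k) (f : Y -> Z) (G : X -> Y) : lmap f -> lmap G -> lmap (fun x => f (G x)).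
Proof. by move=> hf hG a x y; rewrite hG hf. Qed.
Lemma lm_mull (A : algType k) (X : lmodType k) (G : X -> A) (u : A) : lmap G -> lmap (fun x => G x * u).
Proof. by move=> h a x y; rewrite h mulrDl scalerAl. Qed.
Lemma lm_mulr (A : algType k) (X : lmodType k) (G : X -> A) (u : A) : lmap G -> lmap (fun x => u * G x).
Proof. by move=> h a x y; rewrite h mulrDr scalerAr. Qed.
Lemma lm_scale (X Y : lmodType k) (G : X -> Y) (c : k) : lmap G -> lmap (fun x => c *: G x).
Proof. by move=> h a x y; rewrite h scalerDr !scalerA mulrC. Qed.
Lemma lf_scl (X : lmodType k) (f : X -> k) (Y : lmodType k) : True.
Proof. by []. Qed.

Lemma lf_b1 (X Y Z : lmodType k) (b : Y -> Z -> k) (G : X -> Y) z :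
  bilinf b -> lmap G -> linf (fun x => b (G x) z).
Proof. by case=> h1 _ hG a x y; rewrite hG h1. Qed.
Lemma lf_b2 (X Y Z : lmodType k) (b : Y -> Z -> k) (G : X -> Z) m :
  bilinf b -> lmap G -> linf (fun x => b m (G x)).
Proof. by case=> _ h2 hG a x y; rewrite hG h2. Qed.

Lemma lf0 (X : lmodType k) (f : X -> k) : linf f -> f 0 = 0.
Proof.
move=> h; have := h 1 0 0; rewrite scale1r addr0 mul1r => e.
by apply: (@addrI _ (f 0)); rewrite -e addr0.
Qed.
Lemma lm0 (X Y : lmodType k) (f : X -> Y) : lmap f -> f 0 = 0.
Proof.
move=> h; have := h 1 0 0; rewrite scale1r addr0 scale1r => e.
by apply: (@addrI _ (f 0)); rewrite -e addr0.
Qed.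

Lemma linf_sum (X : lmodType k) (f : X -> k) I (r : seq I) (F : I -> X) :
  linf f -> f (\sum_(i <- r) F i) = \sum_(i <- r) f (F i).
Proof.
move=> h; have f0 := lf0 h.
elim: r => [|a r IH]; first by rewrite !big_nil.
by rewrite !big_cons -IH -{1}[F a]scale1r h mul1r.
Qed.
Lemma lmap_sum (X Y : lmodType k) (f : X -> Y) I (r : seq I) (F : I -> X) :
  lmap f -> f (\sum_(i <- r) F i) = \sum_(i <- r) f (F i).
Proof.
move=> h; have f0 := lm0 h.
elim: r => [|a r IH]; first by rewrite !big_nil.
by rewrite !big_cons -IH -{1}[F a]scale1r h scale1r.
Qed.
Lemma linf_scale (X : lmodType k) (f : X -> k) c x : linf f -> f (c *: x) = c * f x.
Proof.
move=> h; have f0 := lf0 h.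
by rewrite -[c *: x]addr0 h f0 addr0.
Qed.
Lemma lmap_scale (X Y : lmodType k) (f : X -> Y) c x : lmap f -> f (c *: x) = c *: f x.
Proof.
move=> h; have f0 := lm0 h.
by rewrite -[c *: x]addr0 h f0 addr0.
Qed.
End Lin.

Section Sw.
Variables (k : fieldType) (H : lmodType k) (D : H -> seq (H * H)).

Lemma eq_sw (W : zmodType) x (F G : H -> H -> W) : (forall a b, F a b = G a b) -> sw D x F = sw D x G.
Proof. by move=> h; apply: eq_bigr => q _; apply: h. Qed.
Lemma lf_sw_body (X : lmodType k) w (F : X -> H -> H -> k) :
  (forall a c, linf (fun x => F x a c)) -> linf (fun x => sw D w (F x)).
Proof.
move=> h a x y; rewrite /sw mulr_sumr -big_split; apply: eq_bigr => q _; exact: h.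
Qed.
Lemma sw_mulr x (F : H -> H -> k) c : c * sw D x F = sw D x (fun a b => c * F a b).
Proof. by rewrite /sw mulr_sumr. Qed.
Lemma sw_mull x (F : H -> H -> k) c : sw D x F * c = sw D x (fun a b => F a b * c).
Proof. by rewrite /sw mulr_suml. Qed.
Lemma sw_lf (X : lmodType k) (f : X -> k) x (F : H -> H -> X) : linf f -> f (sw D x F) = sw D x (fun a b => f (F a b)).
Proof. by move=> h; rewrite /sw linf_sum. Qed.
Lemma sw_lm (X Y : lmodType k) (f : X -> Y) x (F : H -> H -> X) : lmap f -> f (sw D x F) = sw D x (fun a b => f (F a b)).
Proof. by move=> h; rewrite /sw lmap_sum. Qed.
End Sw.
Lemma sw_swap (H1 H2 : Type) (W : zmodType) (D1 : H1 -> seq (H1 * H1)) (D2 : H2 -> seq (H2 * H2)) x y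
  (F : H1 -> H1 -> H2 -> H2 -> W) :
  sw D1 x (fun a b => sw D2 y (fun c d => F a b c d)) = sw D2 y (fun c d => sw D1 x (fun a b => F a b c d)).
Proof. by rewrite /sw; apply: exchange_big. Qed.

Section Extra.
Variable k : fieldType.
Lemma lf_sw_arg (H X : lmodType k) (D : H -> seq (H * H)) (b : H -> H -> k) (G : X -> H) :
  (forall b', bilinf b' -> linf (fun x => sw D x b')) ->
  bilinf b -> lmap G -> linf (fun x => sw D (G x) b).
Proof. move=> hD hb hG; apply: (lf_comp (f := fun y => sw D y b)) hG; exact: hD. Qed.
End Extra.

Lemma lm_mulr_e (k : fieldType) (A : algType k) (u : A) : lmap ( *%R u).
Proof. by move=> a x y; rewrite mulrDr scalerAr. Qed.
Lemma lf_b2e (k : fieldType) (Y Z : lmodType k) (b : Y -> Z -> k) m : bilinf b -> linf (b m).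
Proof. by case=> _ h. Qed.

Ltac lin_leaf := fail.
Ltac lin_base := first [lin_leaf | apply: lf_b2e; lin_leaf].
Ltac lin_go :=
  cbv beta; intros;
  lazymatch goal with
  | |- trilinf _ => split; [|split]; lin_go
  | |- bilinf _ => split; lin_go
  | |- linf (fun _ => _ * _) => first [apply: lf_mull; lin_go | apply: lf_mulr; lin_go]
  | |- linf (fun _ => sw _ _ _) =>
      first [apply: lf_sw_arg; [lin_leaf | lin_go | lin_go] | apply: lf_sw_body; lin_go]
  | |- linf (fun _ => _ _ _) => first [apply: lf_b1; [lin_base|lin_go] | apply: lf_b2; [lin_base|lin_go]
                                      | apply: lf_comp; [lin_base|lin_go]]
  | |- linf (fun x => ?f (@?G x)) => first [lin_base | apply: (lf_comp (f := f) (G := G)); [lin_base|lin_go]]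
  | |- linf _ => lin_base
  | |- lmap (fun x => x) => exact: lm_id
  | |- lmap ( *%R _ ) => exact: lm_mulr_e
  | |- lmap (fun _ => _ * _) => first [apply: lm_mull; lin_go | apply: lm_mulr; lin_go]
  | |- lmap (fun _ => _ *: _) => apply: lm_scale; lin_go
  | |- lmap (fun x => ?f (@?G x)) => first [lin_leaf | apply: (lm_comp (f := f) (G := G)); [lin_leaf|lin_go]]
  | |- lmap _ => lin_leaf
  end.


Section Hopf.
Variables (k : fieldType) (H : algType k) (D : H -> seq (H * H)) (e : H -> k) (S Si : H -> H).
Hypothesis hH : is_hopf D e S Si.

Let hp := hH.
Lemma swL (b : H -> H -> k) : bilinf b -> linf (fun x => sw D x b).
Proof. move: hp; rewrite /is_hopf => -[h _ _ _ _]; exact: h. Qed.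
Lemma coas (t : H -> H -> H -> k) x : trilinf t ->
  sw D x (fun a c => sw D a (fun a1 a2 => t a1 a2 c)) = sw D x (fun a c => sw D c (fun c1 c2 => t a c1 c2)).
Proof. move: hp; rewrite /is_hopf => -[_ h _ _ _] ht; exact: h. Qed.
Lemma e_lin : linf e.
Proof. by move: hp; rewrite /is_hopf => -[_ _ [h _] _ _]. Qed.
Lemma S_lin : lmap S.
Proof. by move: hp; rewrite /is_hopf => -[_ _ _ _ [h _ _ _]]. Qed.
Lemma SK : cancel S Si.
Proof. by move: hp; rewrite /is_hopf => -[_ _ _ _ [_ _ h _]]. Qed.
Lemma SiK : cancel Si S.
Proof. by move: hp; rewrite /is_hopf => -[_ _ _ _ [_ _ _ h]]. Qed.
Lemma Si_lin : lmap Si.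
Proof. move=> a x y; apply: (can_inj SK); by rewrite S_lin !SiK. Qed.
Lemma Dmul (b : H -> H -> k) x y : bilinf b ->
  sw D (x * y) b = sw D x (fun x1 x2 => sw D y (fun y1 y2 => b (x1 * y1) (x2 * y2))).
Proof. move: hp; rewrite /is_hopf => -[_ _ _ [h _ _ _] _] hb; exact: h. Qed.
Lemma D1 (b : H -> H -> k) : bilinf b -> sw D 1 b = b 1 1.
Proof. move: hp; rewrite /is_hopf => -[_ _ _ [_ h _ _] _] hb; exact: h. Qed.
Lemma emul x y : e (x * y) = e x * e y.
Proof. move: hp; rewrite /is_hopf => -[_ _ _ [_ _ h _] _]; exact: h. Qed.
Lemma e1 : e 1 = 1.
Proof. by move: hp; rewrite /is_hopf => -[_ _ _ [_ _ _ h] _]. Qed.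
Lemma counitH x : sw D x (fun a c => e a *: c) = x /\ sw D x (fun a c => e c *: a) = x.
Proof. move: hp; rewrite /is_hopf => -[_ _ [_ h] _ _]; exact: h. Qed.
Lemma antH x : sw D x (fun a c => S a * c) = e x *: 1 /\ sw D x (fun a c => a * S c) = e x *: 1.
Proof. move: hp; rewrite /is_hopf => -[_ _ _ _ [_ h _ _]]; exact: h. Qed.

Lemma cuL (f : H -> k) x : linf f -> sw D x (fun a c => e a * f c) = f x.
Proof.
move=> hf; rewrite -{2}(proj1 (counitH x)) sw_lf //; apply: eq_sw => a c; by rewrite linf_scale.
Qed.
Lemma cuR (f : H -> k) x : linf f -> sw D x (fun a c => f a * e c) = f x.
Proof.
move=> hf; rewrite -{2}(proj2 (counitH x)) sw_lf //; apply: eq_sw => a c; by rewrite linf_scale // mulrC.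
Qed.
Lemma antL (f : H -> k) x : linf f -> sw D x (fun a c => f (S a * c)) = e x * f 1.
Proof. move=> hf; by rewrite -sw_lf // (proj1 (antH x)) linf_scale. Qed.
Lemma antR (f : H -> k) x : linf f -> sw D x (fun a c => f (a * S c)) = e x * f 1.
Proof. move=> hf; by rewrite -sw_lf // (proj2 (antH x)) linf_scale. Qed.
End Hopf.

Section HopfDerived.
Variables (k : fieldType) (H : algType k) (D : H -> seq (H * H)) (e : H -> k) (S Si : H -> H).
Hypothesis hH : is_hopf D e S Si.
Ltac lin_leaf ::= first [assumption | exact: (S_lin hH) | exact: (e_lin hH) | exact: (Si_lin hH) | exact: (swL hH) ].

Lemma S1 : S 1 = 1.
Proof.
apply: separate => f hf.
have -> : f (S 1) = sw D 1 (fun a c => f (S a * c)).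
  rewrite (D1 hH); first by rewrite mulr1.
  lin_go.
by rewrite (antL hH) // (e1 hH) mul1r.
Qed.

Lemma Smul x y : S (x * y) = S y * S x.
Proof.
apply: separate => f hf.
have eA : f (S (x * y)) =
  sw D x (fun x1 x' => sw D y (fun y1 y' => f (S (x1 * y1)) * (e x' * e y'))).
  transitivity (sw D x (fun x1 x' => f (S (x1 * y)) * e x')); first by rewrite (cuR hH) //; lin_go.
  apply: eq_sw => x1 x'.
  transitivity (sw D y (fun y1 y' => f (S (x1 * y1)) * e y') * e x'); first by rewrite (cuR hH) //; lin_go.
  rewrite sw_mull; apply: eq_sw => y1 y'; ring.
have eB : forall (Z : H) x' y', e x' * e y' * f Z =
  sw D x' (fun x2 x3 => sw D y' (fun y2 y3 => f (Z * (x2 * (y2 * S y3) * S x3)))).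
  move=> Z x' y'.
  transitivity (sw D x' (fun x2 x3 => e y' * f (Z * (x2 * 1 * S x3)))); last first.
    apply: eq_sw => x2 x3; rewrite (antR hH (f := fun w => f (Z * (x2 * w * S x3)))) //; lin_go.
  rewrite -sw_mulr; under eq_sw => x2 x3 do rewrite mulr1.
  rewrite (antR hH (f := fun w => f (Z * w))); last by lin_go.
  by rewrite mulr1; ring.
rewrite eA.
have eAB : sw D x (fun x1 x' => sw D y (fun y1 y' => f (S (x1 * y1)) * (e x' * e y'))) =
  sw D x (fun x1 x' => sw D x' (fun x2 x3 => sw D y (fun y1 y' => sw D y' (fun y2 y3 =>
     f (S (x1 * y1) * (x2 * (y2 * S y3) * S x3)))))).
  apply: eq_sw => x1 x'. rewrite sw_swap. apply: eq_sw => y1 y'. by rewrite mulrC eB.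
rewrite eAB.
rewrite -(coas hH (t := fun x1 x2 x3 => sw D y (fun y1 y' => sw D y' (fun y2 y3 =>
     f (S (x1 * y1) * (x2 * (y2 * S y3) * S x3)))))); last by lin_go.
transitivity (sw D x (fun a x3 => sw D y (fun b y3 => e a * e b * f (S y3 * S x3)))); last first.
  transitivity (sw D x (fun a x3 => e a * f (S y * S x3))); last by rewrite (cuL hH) //; lin_go.
  apply: eq_sw => a x3; rewrite -(cuL hH (f := fun z => f (S z * S x3))); last by lin_go.
  rewrite sw_mulr; apply: eq_sw => b y3; ring.
apply: eq_sw => a x3.
rewrite sw_swap. under eq_sw => c d do rewrite sw_swap.
rewrite -(coas hH (t := fun y1 y2 y3 => sw D a (fun x1 x2 => f (S (x1 * y1) * (x2 * (y2 * S y3) * S x3))))); last by lin_go.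
apply: eq_sw => b y3.
transitivity (sw D (a * b) (fun u v => f (S u * v * (S y3 * S x3)))).
  rewrite (Dmul hH); last by lin_go.
  rewrite sw_swap; apply: eq_sw => x1 x2; apply: eq_sw => y1 y2.
  by rewrite !mulrA.
rewrite (antL hH (f := fun z => f (z * (S y3 * S x3)))); last by lin_go.
by rewrite (emul hH) mul1r.
Qed.

Lemma eS x : e (S x) = e x.
Proof.
rewrite -(cuR hH (f := fun t => e (S t))); last by lin_go.
transitivity (sw D x (fun a c => e (S a * c))).
  by apply: eq_sw => a c; rewrite (emul hH).
by rewrite (antL hH (f := e)) ?(e1 hH) ?mulr1 //; lin_go.
Qed.

Lemma E4 (b : H -> H -> k) y u v : bilinf b ->
  e y * b u v = sw D y (fun y1 y' => sw D y' (fun y2 y'' => sw D y'' (fun y3 y4 =>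
     b (u * y1 * S y4) (v * (y2 * S y3))))).
Proof.
move=> hb.
transitivity (sw D y (fun y1 y' => b (u * y1 * S y') v)).
  transitivity (sw D y (fun y1 y' => b (u * (y1 * S y')) v)).
    rewrite (antR hH (f := fun z => b (u * z) v)); last by lin_go.
    by rewrite mulr1 mulrC.
  by apply: eq_sw => y1 y'; rewrite mulrA.
apply: eq_sw => y1 y'.
rewrite -(coas hH (t := fun y2 y3 y4 => b (u * y1 * S y4) (v * (y2 * S y3)))); last by lin_go.
transitivity (sw D y' (fun m y4 => e m * b (u * y1 * S y4) v)).
  by rewrite (cuL hH (f := fun z => b (u * y1 * S z) v)) //; lin_go.
apply: eq_sw => m y4.
rewrite (antR hH (f := fun z => b (u * y1 * S y4) (v * z))); last by lin_go.
by rewrite mulr1.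
Qed.

Lemma DS (b : H -> H -> k) x : bilinf b -> sw D (S x) b = sw D x (fun a c => b (S c) (S a)).
Proof.
move=> hb.
transitivity (sw D x (fun p w => sw D (S p) b * e w)).
  by rewrite (cuR hH (f := fun z => sw D (S z) b)) //; lin_go.
transitivity (sw D x (fun p w => sw D (S p) (fun u v => sw D w (fun w1 w' => sw D w' (fun w2 y'' =>
   sw D y'' (fun w3 w4 => b (u * w1 * S w4) (v * (w2 * S w3)))))))).
  apply: eq_sw => p w; rewrite sw_mull; apply: eq_sw => u v; by rewrite mulrC E4.
under eq_sw => p w do under eq_sw => u v do
  (rewrite -(coas hH (t := fun w1 w2 y'' => sw D y'' (fun w3 w4 => b (u * w1 * S w4) (v * (w2 * S w3))))); last by lin_go).
under eq_sw => p w do rewrite sw_swap.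
rewrite -(coas hH (t := fun p q y'' => sw D (S p) (fun u v => sw D q (fun a1 a2 => sw D y'' (fun w3 w4 =>
   b (u * a1 * S w4) (v * (a2 * S w3))))))); last by lin_go.
rewrite -(cuL hH (f := fun B => sw D B (fun a c => b (S c) (S a)))); last by lin_go.
apply: eq_sw => A B.
under eq_sw => p q do under eq_sw => u v do rewrite sw_swap.
under eq_sw => p q do rewrite sw_swap.
rewrite sw_swap sw_mulr; apply: eq_sw => w3 w4.
transitivity (sw D A (fun p q => sw D (S p * q) (fun s t => b (s * S w4) (t * S w3)))).
  apply: eq_sw => p q; rewrite (Dmul hH); last by lin_go.
  by apply: eq_sw => u v; apply: eq_sw => a1 a2; rewrite !mulrA.
rewrite (antL hH (f := fun z => sw D z (fun s t => b (s * S w4) (t * S w3)))); last by lin_go.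
by rewrite (D1 hH) ?mul1r //; lin_go.
Qed.
End HopfDerived.

Section Pair.
Variables (k : fieldType) (U V : algType k).
Variables (DU : U -> seq (U * U)) (eU : U -> k) (SU SUi : U -> U).
Variables (DV : V -> seq (V * V)) (eV : V -> k) (SV SVi : V -> V).
Variable p : U -> V -> k.
Hypotheses (hU : is_hopf DU eU SU SUi) (hV : is_hopf DV eV SV SVi)
  (hp : is_pairing DU eU DV eV p).

Lemma p_bil : bilinf p. Proof. by move: hp; rewrite /is_pairing => -[]. Qed.
Lemma p_mul1 m n x : p (m * n) x = sw DV x (fun x1 x2 => p m x1 * p n x2).
Proof. by move: hp; rewrite /is_pairing => -[_ h _ _ _]. Qed.
Lemma p_mul2 m x y : p m (x * y) = sw DU m (fun m1 m2 => p m1 x * p m2 y).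
Proof. by move: hp; rewrite /is_pairing => -[_ _ h _ _]. Qed.
Lemma p_1l x : p 1 x = eV x.
Proof. by move: hp; rewrite /is_pairing => -[_ _ _ h _]. Qed.
Lemma p_1r m : p m 1 = eU m.
Proof. by move: hp; rewrite /is_pairing => -[_ _ _ _ h]. Qed.

Ltac lin_leaf ::= first [assumption | exact: p_bil | exact: (S_lin hU) | exact: (e_lin hU) | exact: (Si_lin hU)
   | exact: (swL hU) | exact: (S_lin hV) | exact: (e_lin hV) | exact: (Si_lin hV) | exact: (swL hV)].

Lemma pS m y : p (SU m) y = p m (SV y).
Proof.
transitivity (sw DU m (fun m1 m' => sw DV y (fun y1 y' => p (SU m1) y1 * (eU m' * eV y')))).
  transitivity (sw DU m (fun m1 m' => p (SU m1) y * eU m')); first by rewrite (cuR hU) //; lin_go.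
  apply: eq_sw => m1 m'.
  transitivity (sw DV y (fun y1 y' => p (SU m1) y1 * eV y') * eU m'); first by rewrite (cuR hV) //; lin_go.
  rewrite sw_mull; apply: eq_sw => y1 y'; ring.
have eB : forall m' y', eU m' * eV y' =
   sw DU m' (fun m2 m3 => sw DV y' (fun y2 y3 => p m2 y2 * p m3 (SV y3))).
  move=> m' y'; rewrite sw_swap.
  transitivity (sw DV y' (fun y2 y3 => p m' (y2 * SV y3))); last first.
    by apply: eq_sw => y2 y3; rewrite p_mul2.
  rewrite (antR hV (f := p m')); last by lin_go.
  by rewrite p_1r mulrC.
under eq_sw => m1 m' do under eq_sw => y1 y' do (rewrite eB sw_mulr; under eq_sw => m2 m3 do rewrite sw_mulr).
under eq_sw => m1 m' do rewrite sw_swap.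
rewrite -(coas hU (t := fun m1 m2 m3 => sw DV y (fun y1 y' => sw DV y' (fun y2 y3 =>
   p (SU m1) y1 * (p m2 y2 * p m3 (SV y3)))))); last by lin_go.
rewrite -(cuL hU (f := fun z => p z (SV y))); last by lin_go.
apply: eq_sw => a m3.
under eq_sw => m1 m2 do
  (rewrite -(coas hV (t := fun y1 y2 y3 => p (SU m1) y1 * (p m2 y2 * p m3 (SV y3)))); last by lin_go).
rewrite sw_swap.
rewrite -(cuL hV (f := fun z => p m3 (SV z))); last by lin_go.
rewrite sw_mulr; apply: eq_sw => c y3.
transitivity (sw DU a (fun m1 m2 => p (SU m1 * m2) c) * p m3 (SV y3)).
  rewrite sw_mull; apply: eq_sw => m1 m2; rewrite p_mul1 sw_mull.
  by apply: eq_sw => y1 y2; rewrite mulrA.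
rewrite (antL hU (f := fun z => p z c)); last by lin_go.
by rewrite p_1l mulrA.
Qed.

Lemma pSi m y : p (SUi m) y = p m (SVi y).
Proof. by rewrite -{2}(SiK hU m) pS (SiK hV). Qed.
End Pair.


Section Main.
Variables (k : fieldType) (U V : algType k).
Variables (DU : U -> seq (U * U)) (eU : U -> k) (SU SUi : U -> U).
Variables (DV : V -> seq (V * V)) (eV : V -> k) (SV SVi : V -> V).
Variables (p : U -> V -> k) (g : V -> U).
Hypotheses (hU : is_hopf DU eU SU SUi) (hV : is_hopf DV eV SV SVi)
  (hp : is_pairing DU eU DV eV p) (hg : is_hopf_map_cop DU eU SUi DV eV SV g).
Hypothesis hgm : forall (y : V) (m : U),
     g y * m = sw3 DU m (fun m1 m2 m3 => sw3 DV y (fun y1 y2 y3 =>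
                 (p (SUi m1) y3 * p m3 y1) *: (m2 * g y2))).

Lemma g_lin : lmap g. Proof. by move: hg; rewrite /is_hopf_map_cop => -[]. Qed.
Lemma g_mul x y : g (x * y) = g x * g y.
Proof. by move: hg; rewrite /is_hopf_map_cop => -[_ [h _] _ _ _]. Qed.
Lemma g_1 : g 1 = 1.
Proof. by move: hg; rewrite /is_hopf_map_cop => -[_ [_ h] _ _ _]. Qed.
Lemma g_cop (b : U -> U -> k) y : bilinf b -> sw DU (g y) b = sw DV y (fun y1 y2 => b (g y2) (g y1)).
Proof. by move: hg; rewrite /is_hopf_map_cop => -[_ _ h _ _] hb; apply: h. Qed.
Lemma g_e y : eU (g y) = eV y.
Proof. by move: hg; rewrite /is_hopf_map_cop => -[_ _ _ h _]. Qed.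
Lemma g_S y : g (SV y) = SUi (g y).
Proof. by move: hg; rewrite /is_hopf_map_cop => -[_ _ _ _ h]. Qed.

Ltac lin_leaf ::= first [assumption | exact: (p_bil hp) | exact: g_lin
   | exact: (S_lin hU) | exact: (e_lin hU) | exact: (Si_lin hU)
   | exact: (swL hU) | exact: (S_lin hV) | exact: (e_lin hV) | exact: (Si_lin hV) | exact: (swL hV)].

Lemma R1 w v y : p (g (w * v)) y = sw DV y (fun y1 y2 => p (g w) y1 * p (g v) y2).
Proof. by rewrite g_mul (p_mul1 hp). Qed.
Lemma R2 w y z : p (g w) (y * z) = sw DV w (fun w1 w2 => p (g w2) y * p (g w1) z).
Proof. rewrite (p_mul2 hp) (g_cop (b := fun a c => p a y * p c z)) //; lin_go. Qed.
Lemma R3l y : p (g 1) y = eV y. Proof. by rewrite g_1 (p_1l hp). Qed.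
Lemma R3r w : p (g w) 1 = eV w. Proof. by rewrite (p_1r hp) g_e. Qed.
Lemma R4 w y : p (g (SV w)) y = p (g w) (SVi y).
Proof. by rewrite g_S (pSi hU hV hp). Qed.
Lemma RSS a b : p (g (SV a)) (SV b) = p (g a) b.
Proof. by rewrite R4 (SK hV). Qed.

Lemma SSk (f : U -> k) y w : linf f -> f (g (y * w)) =
  sw DV w (fun w1 w2 => sw DV w2 (fun u1 u2 => sw DV y (fun b y3 => sw DV b (fun y1 y2 =>
    p (g (SV u2)) y3 * p (g w1) y1 * f (g (u1 * y2)))))).
Proof.
move=> hf.
rewrite g_mul hgm /sw3 sw_lf //.
under eq_sw => a c do (rewrite sw_lf //; under eq_sw => a1 a2 do
  (rewrite sw_lf //; under eq_sw => b y3 do (rewrite sw_lf //; under eq_sw => y1 y2 do rewrite linf_scale //))).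
rewrite g_cop; last by lin_go.
under eq_sw => w1 w2 do (rewrite g_cop; last by lin_go).
apply: eq_sw => w1 w2; apply: eq_sw => u1 u2; apply: eq_sw => b y3; apply: eq_sw => y1 y2.
by rewrite g_S g_mul.
Qed.

Lemma Rinner d e' : sw DV d (fun u2 w4 => sw DV e' (fun y3 y4 => p (g (SV u2)) y3 * p (g w4) y4)) = eV d * eV e'.
Proof.
under eq_sw => u2 w4 do rewrite -R1.
by rewrite (antL hV (f := fun z => p (g z) e')) ?R3l //; lin_go.
Qed.

Lemma LC (f : U -> k) y w : linf f ->
  sw DV w (fun w1 w2 => sw DV y (fun y1 y2 => f (g (y1 * w1)) * p (g w2) y2)) =
  sw DV w (fun w1 w2 => sw DV y (fun y1 y2 => p (g w1) y1 * f (g (w2 * y2)))).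
Proof.
move=> hf.
transitivity (sw DV w (fun a w4 => sw DV a (fun w1 a' => sw DV a' (fun u1 u2 =>
   sw DV y (fun b y4 => sw DV b (fun b' y3 => sw DV b' (fun y1 y2 =>
     p (g (SV u2)) y3 * p (g w1) y1 * f (g (u1 * y2)) * p (g w4) y4))))))).
  apply: eq_sw => a w4.
  transitivity (sw DV y (fun b y4 => sw DV a (fun w1 a' => sw DV a' (fun u1 u2 =>
     sw DV b (fun b' y3 => sw DV b' (fun y1 y2 =>
     p (g (SV u2)) y3 * p (g w1) y1 * f (g (u1 * y2)) * p (g w4) y4)))))).
    apply: eq_sw => b y4; rewrite SSk // sw_mull; apply: eq_sw => w1 a'.
    rewrite sw_mull; apply: eq_sw => u1 u2; rewrite sw_mull; apply: eq_sw => b' y3.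
    by rewrite sw_mull.
  by rewrite sw_swap; apply: eq_sw => w1 a'; rewrite sw_swap.
rewrite (coas hV); last by lin_go.
under eq_sw => w1 c do (rewrite (coas hV); last by lin_go).
under eq_sw => w1 c do under eq_sw => u1 d do under eq_sw => u2 w4 do (rewrite (coas hV); last by lin_go).
transitivity (sw DV w (fun w1 c => sw DV c (fun u1 d => sw DV y (fun b' e' => sw DV b' (fun y1 y2 =>
   p (g w1) y1 * f (g (u1 * y2)) * sw DV d (fun u2 w4 => sw DV e' (fun y3 y4 => p (g (SV u2)) y3 * p (g w4) y4))))))).
  apply: eq_sw => w1 c; apply: eq_sw => u1 d.
  rewrite sw_swap; apply: eq_sw => b' e'.
  under eq_sw => u2 w4 do rewrite sw_swap.
  rewrite sw_swap; apply: eq_sw => y1 y2.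
  rewrite sw_mulr; apply: eq_sw => u2 w4; rewrite sw_mulr; apply: eq_sw => y3 y4; ring.
apply: eq_sw => w1 c.
under eq_sw => u1 d do under eq_sw => b' e' do under eq_sw => y1 y2 do rewrite Rinner.
rewrite -(cuR hV (f := fun z => sw DV y (fun y1 y2 => p (g w1) y1 * f (g (z * y2))))); last by lin_go.
apply: eq_sw => u1 d.
rewrite -(cuR hV (f := fun z => sw DV z (fun y1 y2 => p (g w1) y1 * f (g (u1 * y2))))); last by lin_go.
rewrite sw_mull; apply: eq_sw => b' e'; rewrite !sw_mull; apply: eq_sw => y1 y2; ring.
Qed.

Definition ups x := sw DV x (fun x1 x2 => p (g x2) (SV x1)).
Definition th x := sw DV x (fun x1 x2 => p (g x1) (SV x2)).
Definition thi x := sw DV x (fun x1 x2 => p (g (SV (SV x1))) x2).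
Definition upsi x := sw DV x (fun x1 x2 => p (g (SV (SV x2))) x1).
Lemma ups_lin : linf ups. Proof. rewrite /ups; lin_go. Qed.
Lemma th_lin : linf th. Proof. rewrite /th; lin_go. Qed.
Lemma thi_lin : linf thi. Proof. rewrite /thi; lin_go. Qed.
Lemma upsi_lin : linf upsi. Proof. rewrite /upsi; lin_go. Qed.

Ltac lin_leaf ::= first [assumption | exact: (p_bil hp) | exact: g_lin
   | exact: (S_lin hU) | exact: (e_lin hU) | exact: (Si_lin hU)
   | exact: (swL hU) | exact: (S_lin hV) | exact: (e_lin hV) | exact: (Si_lin hV) | exact: (swL hV)
   | exact: ups_lin | exact: th_lin | exact: thi_lin | exact: upsi_lin].

Lemma U1 (f : U -> k) x : linf f ->
  ups x * f (g 1) = sw DV x (fun c a => sw DV c (fun c1 c2 => sw DV a (fun w1 w2 =>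
     p (g w1) (SV c2) * f (g (w2 * SV c1))))).
Proof.
move=> hf; symmetry.
transitivity (sw DV x (fun c a => sw DV a (fun w1 w2 => sw DV c (fun c1 c2 =>
   f (g (SV c2 * w1)) * p (g w2) (SV c1))))).
  apply: eq_sw => c a; rewrite sw_swap.
  transitivity (sw DV a (fun w1 w2 => sw DV (SV c) (fun y1 y2 => p (g w1) y1 * f (g (w2 * y2))))).
    by apply: eq_sw => w1 w2; rewrite (DS hV) //; lin_go.
  rewrite -LC //; apply: eq_sw => w1 w2; rewrite (DS hV) //; lin_go.
under eq_sw => c a do rewrite sw_swap.
rewrite (coas hV); last by lin_go.
under eq_sw => c1 z do (rewrite -(coas hV); last by lin_go).
rewrite /ups sw_mull; apply: eq_sw => c1 z.
transitivity (sw DV z (fun q w2 => eV q * p (g w2) (SV c1)) * f (g 1)); last first.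
  by rewrite (cuL hV (f := fun t => p (g t) (SV c1))) //; lin_go.
rewrite sw_mull; apply: eq_sw => q w2.
rewrite -sw_mull (antL hV (f := fun t => f (g t))); last by lin_go.
ring.
Qed.

Lemma T1 (f : U -> k) x : linf f ->
  th x * f (g 1) = sw DV x (fun a c => sw DV a (fun w1 w2 => sw DV c (fun c1 c2 =>
     f (g (SV c2 * w1)) * p (g w2) (SV c1)))).
Proof.
move=> hf; symmetry.
transitivity (sw DV x (fun a c => sw DV a (fun w1 w2 => sw DV c (fun c1 c2 =>
   p (g w1) (SV c2) * f (g (w2 * SV c1)))))).
  apply: eq_sw => a c.
  transitivity (sw DV a (fun w1 w2 => sw DV (SV c) (fun y1 y2 => f (g (y1 * w1)) * p (g w2) y2))).
    by apply: eq_sw => w1 w2; rewrite (DS hV) //; lin_go.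
  rewrite LC //; apply: eq_sw => w1 w2; rewrite (DS hV) //; lin_go.
rewrite (coas hV); last by lin_go.
under eq_sw => w1 z do (rewrite -(coas hV); last by lin_go).
rewrite /th sw_mull; apply: eq_sw => w1 z.
transitivity (sw DV z (fun q c2 => eV q * p (g w1) (SV c2)) * f (g 1)); last first.
  by rewrite (cuL hV (f := fun t => p (g w1) (SV t))) //; lin_go.
rewrite sw_mull; apply: eq_sw => q c2.
under eq_sw => w2 c1 do rewrite mulrC.
rewrite -sw_mull (antR hV (f := fun t => f (g t))); last by lin_go.
ring.
Qed.

Lemma IntII (f : U -> k) x : linf f ->
  sw DV x (fun a b => ups a * f (g b)) = sw DV x (fun a b => f (g (SV (SV a))) * ups b).
Proof.
move=> hf; symmetry.
transitivity (sw DV x (fun a b => sw DV b (fun c a' => sw DV c (fun c1 c2 => sw DV a' (fun w1 w2 =>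
     p (g w1) (SV c2) * f (g (w2 * SV (SV a * c1)))))))).
  apply: eq_sw => a b.
  have -> : f (g (SV (SV a))) * ups b = ups b * (fun m => f (m * g (SV (SV a)))) (g 1).
    by rewrite /= g_1 mul1r mulrC.
  rewrite (U1 (f := fun m => f (m * g (SV (SV a)))) b); last by lin_go.
  apply: eq_sw => c a'; apply: eq_sw => c1 c2; apply: eq_sw => w1 w2.
  by rewrite -g_mul (Smul hV) mulrA.
under eq_sw => a b do (rewrite (coas hV); last by lin_go).
rewrite -(coas hV); last by lin_go.
transitivity (sw DV x (fun q z => eV q * sw DV z (fun c2 a' => sw DV a' (fun w1 w2 =>
     p (g w1) (SV c2) * f (g w2))))).
  apply: eq_sw => q z.
  rewrite (antL hV (f := fun t => sw DV z (fun c2 a' => sw DV a' (fun w1 w2 =>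
     p (g w1) (SV c2) * f (g (w2 * SV t)))))); last by lin_go.
  by congr (_ * _); apply: eq_sw => c2 a'; apply: eq_sw => w1 w2; rewrite (S1 hV) mulr1.
rewrite (cuL hV (f := fun z => sw DV z (fun c2 a' => sw DV a' (fun w1 w2 =>
     p (g w1) (SV c2) * f (g w2))))); last by lin_go.
rewrite /ups; symmetry.
under eq_sw => a b do rewrite sw_mull.
by rewrite (coas hV); last by lin_go.
Qed.

Lemma IntI (f : U -> k) x : linf f ->
  sw DV x (fun a b => th a * f (g (SV (SV b)))) = sw DV x (fun a b => f (g a) * th b).
Proof.
move=> hf.
transitivity (sw DV x (fun a b => sw DV a (fun a' c => sw DV a' (fun w1 w2 => sw DV c (fun c1 c2 =>
     f (g (SV (c2 * SV b) * w1)) * p (g w2) (SV c1)))))).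
  apply: eq_sw => a b.
  have -> : th a * f (g (SV (SV b))) = th a * (fun m => f (g (SV (SV b)) * m)) (g 1).
    by rewrite /= g_1 mulr1.
  rewrite (T1 (f := fun m => f (g (SV (SV b)) * m)) a); last by lin_go.
  apply: eq_sw => a' c; apply: eq_sw => w1 w2; apply: eq_sw => c1 c2.
  by rewrite -g_mul mulrA -(Smul hV).
rewrite (coas hV); last by lin_go.
under eq_sw => a' z do under eq_sw => c b do rewrite sw_swap.
under eq_sw => a' z do (rewrite (coas hV); last by lin_go).
under eq_sw => a' z do under eq_sw => c1 q do rewrite sw_swap.
under eq_sw => a' z do rewrite sw_swap.
transitivity (sw DV x (fun a' z => sw DV a' (fun w1 w2 => sw DV z (fun c1 q =>
    f (g w1) * p (g w2) (SV c1) * eV q)))).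
  apply: eq_sw => a' z; apply: eq_sw => w1 w2; apply: eq_sw => c1 q.
  rewrite (antR hV (f := fun t => f (g (SV t * w1)) * p (g w2) (SV c1))); last by lin_go.
  by rewrite (S1 hV) mul1r mulrC.
under eq_sw => a' z do under eq_sw => w1 w2 do
  (rewrite (cuR hV (f := fun t => f (g w1) * p (g w2) (SV t))); last by lin_go).
rewrite /th.
under [RHS]eq_sw => a b do rewrite sw_mulr.
by rewrite -(coas hV); last by lin_go.
Qed.

Lemma EasyII x : sw DV x (fun a b => upsi a * ups b) = eV x.
Proof.
rewrite /upsi.
under eq_sw => a b do rewrite sw_mull.
rewrite (coas hV); last by lin_go.
under eq_sw => a1 z do
  (rewrite -(IntII (f := fun m => p m a1)); last by lin_go).
rewrite /ups.
under eq_sw => a1 z do (under eq_sw => a2 b do rewrite sw_mull; rewrite (coas hV); last by lin_go).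
under eq_sw => a1 z do under eq_sw => c D do (rewrite (_ : sw DV D _ = p (g D) (a1 * SV c));
   [ | by rewrite R2; apply: eq_sw => d b; rewrite mulrC]).
rewrite -(coas hV (t := fun a1 c D => p (g D) (a1 * SV c))); last by lin_go.
under eq_sw => q D do (rewrite (antR hV (f := p (g D))); last by lin_go).
under eq_sw => q D do rewrite R3r.
by rewrite (cuL hV (f := eV)) //; lin_go.
Qed.

Lemma EasyI x : sw DV x (fun a b => th a * thi b) = eV x.
Proof.
rewrite /thi.
under eq_sw => a b do rewrite sw_mulr.
rewrite -(coas hV); last by lin_go.
under eq_sw => z b2 do
  (rewrite (IntI (f := fun m => p m b2)); last by lin_go).
rewrite /th.
under eq_sw => z b2 do (under eq_sw => a b1 do rewrite sw_mulr; rewrite -(coas hV); last by lin_go).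
under eq_sw => z b2 do under eq_sw => W d do (rewrite (_ : sw DV W _ = p (g W) (SV d * b2));
   [ | by rewrite R2; apply: eq_sw => a c; rewrite mulrC]).
rewrite (coas hV (t := fun W d b2 => p (g W) (SV d * b2))); last by lin_go.
under eq_sw => W q do (rewrite (antL hV (f := p (g W))); last by lin_go).
under eq_sw => W q do rewrite R3r mulrC.
by rewrite (cuL hV (f := eV)) //; lin_go.
Qed.

Lemma Ck w y c :
  sw DV w (fun w1 w2 => sw DV y (fun y1 y2 => sw DV c (fun c1 c2 =>
     p (g y1) (SV c2) * p (g w1) (SV c1) * p (g w2) y2))) =
  sw DV w (fun w1 w2 => sw DV y (fun y1 y2 => sw DV c (fun c1 c2 =>
     p (g w1) y1 * (p (g w2) (SV c2) * p (g y2) (SV c1))))).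
Proof.
transitivity (sw DV w (fun w1 w2 => sw DV y (fun y1 y2 => p (g (y1 * w1)) (SV c) * p (g w2) y2))).
  apply: eq_sw => w1 w2; apply: eq_sw => y1 y2; rewrite R1 (DS hV); last by lin_go.
  by rewrite sw_mull.
rewrite (LC (f := fun m => p m (SV c))); last by lin_go.
apply: eq_sw => w1 w2; apply: eq_sw => y1 y2; rewrite R1 (DS hV); last by lin_go.
by rewrite sw_mulr.
Qed.

Lemma V1 w x :
  sw DV w (fun w1 w2 => sw DV x (fun c1 z => sw DV z (fun m y2 =>
     p (g w1) (SV c1) * ups m * p (g w2) y2))) = eV w * ups x.
Proof.
transitivity (sw DV x (fun c1 z => sw DV z (fun m y2 => sw DV m (fun c2 y1 => sw DV w (fun w1 w2 =>
     p (g y1) (SV c2) * p (g w1) (SV c1) * p (g w2) y2))))).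
  rewrite sw_swap; apply: eq_sw => c1 z; rewrite sw_swap; apply: eq_sw => m y2.
  rewrite /ups.
  under eq_sw => w1 w2 do rewrite sw_mulr sw_mull.
  rewrite sw_swap; apply: eq_sw => c2 y1; apply: eq_sw => w1 w2; ring.
under eq_sw => c1 z do (rewrite (coas hV); last by lin_go).
rewrite -(coas hV); last by lin_go.
transitivity (sw DV x (fun c n => sw DV w (fun w1 w2 => sw DV n (fun y1 y2 => sw DV c (fun c1 c2 =>
     p (g y1) (SV c2) * p (g w1) (SV c1) * p (g w2) y2))))).
  apply: eq_sw => c n.
  under eq_sw => c1 c2 do rewrite sw_swap.
  rewrite sw_swap; apply: eq_sw => w1 w2; by rewrite sw_swap.
under eq_sw => c n do rewrite Ck.
transitivity (sw DV x (fun c y => sw DV c (fun c1 c2 => sw DV y (fun y1 y2 =>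
     p (g w) (SV c2 * y1) * p (g y2) (SV c1))))).
  apply: eq_sw => c y.
  rewrite sw_swap; under eq_sw => y1 y2 do rewrite sw_swap.
  rewrite sw_swap; apply: eq_sw => c1 c2; apply: eq_sw => y1 y2.
  by rewrite R2 sw_mull; apply: eq_sw => w1 w2; ring.
rewrite (coas hV); last by lin_go.
under eq_sw => c1 z do (rewrite -(coas hV); last by lin_go).
under eq_sw => c1 z do under eq_sw => q y2 do
  (rewrite (antL hV (f := fun t => p (g w) t * p (g y2) (SV c1))); last by lin_go).
under eq_sw => c1 z do
  (rewrite (cuL hV (f := fun t => p (g w) 1 * p (g t) (SV c1))); last by lin_go).
rewrite /ups sw_mulr; apply: eq_sw => c1 z.
by rewrite R3r.
Qed.

Lemma Vcol VV X K : sw DV VV (fun v1 v2 => sw DV X (fun x1 c1 => p (g v1) x1 * (p (g (SV v2)) c1 * K))) =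
  eV VV * eV X * K.
Proof.
under eq_sw => v1 v2 do under eq_sw => x1 c1 do rewrite mulrA.
under eq_sw => v1 v2 do rewrite -sw_mull -R1.
rewrite -sw_mull (antR hV (f := fun t => p (g t) X)); last by lin_go.
by rewrite R3l.
Qed.

Lemma Ig v x : sw DV x (fun x1 x2 => p (g v) x1 * ups x2) = sw DV x (fun x1 x2 => ups x1 * p (g (SV (SV v))) x2).
Proof.
transitivity (sw DV v (fun VV v3 => sw DV x (fun X z => sw DV VV (fun v1 v2 => sw DV X (fun x1 c1 =>
   p (g v1) x1 * (p (g (SV v2)) c1 * sw DV z (fun m y2 => ups m * p (g (SV (SV v3))) y2))))))).
  rewrite -(cuR hV (f := fun t => sw DV x (fun x1 x2 => p (g t) x1 * ups x2)) v); last by lin_go.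
  transitivity (sw DV v (fun v1 v' => sw DV x (fun x1 x2 => p (g v1) x1 *
     sw DV (SV (SV v')) (fun w1 w2 => sw DV x2 (fun c1 z => sw DV z (fun m y2 =>
     p (g w1) (SV c1) * ups m * p (g w2) y2)))))).
    apply: eq_sw => v1 v'; rewrite sw_mull; apply: eq_sw => x1 x2.
    by rewrite V1 (eS hV) (eS hV) -mulrA (mulrC (ups x2)).
  under eq_sw => v1 v' do under eq_sw => x1 x2 do
    ((rewrite (DS hV); last by lin_go); (rewrite (DS hV); last by lin_go)).
  under eq_sw => v1 v' do under eq_sw => x1 x2 do under eq_sw => v2 v3 do under eq_sw => c1 z do
    under eq_sw => m y2 do rewrite RSS.
  under eq_sw => v1 v' do under eq_sw => x1 x2 do rewrite sw_mulr.
  under eq_sw => v1 v' do rewrite sw_swap.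
  rewrite -(coas hV); last by lin_go.
  apply: eq_sw => VV v3.
  under eq_sw => a1 a2 do under eq_sw => a b do (rewrite sw_mulr; under eq_sw => c1 z do rewrite sw_mulr).
  under eq_sw => v1 v2 do (rewrite -(coas hV); last by lin_go).
  rewrite sw_swap; apply: eq_sw => X z; apply: eq_sw => v1 v2; apply: eq_sw => x1 c1.
  rewrite sw_mulr sw_mulr; apply: eq_sw => m y2; ring.
under eq_sw => VV v3 do under eq_sw => X z do rewrite Vcol.
transitivity (sw DV v (fun VV v3 => eV VV * sw DV x (fun X z => eV X * sw DV z (fun m y2 => ups m * p (g (SV (SV v3))) y2)))).
  apply: eq_sw => VV v3; rewrite sw_mulr; apply: eq_sw => X z; ring.
rewrite (cuL hV (f := fun t => sw DV x (fun X z => eV X * sw DV z (fun m y2 => ups m * p (g (SV (SV t))) y2)))).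
  rewrite (cuL hV (f := fun t => sw DV t (fun m y2 => ups m * p (g (SV (SV v))) y2))) //; lin_go.
lin_go.
Qed.

Lemma HardII x : sw DV x (fun a b => ups a * upsi b) = eV x.
Proof.
rewrite /upsi.
under eq_sw => a b do rewrite sw_mulr.
rewrite -(coas hV); last by lin_go.
under eq_sw => z b2 do rewrite -Ig.
rewrite /ups.
under eq_sw => z b2 do under eq_sw => x1 x2 do rewrite sw_mulr.
rewrite (coas hV); last by lin_go.
under eq_sw => x1 n do (rewrite (coas hV); last by lin_go).
under eq_sw => x1 n do under eq_sw => c D do (rewrite (_ : sw DV D _ = p (g D) (x1 * SV c));
   [ | by rewrite R2]).
rewrite -(coas hV (t := fun x1 c D => p (g D) (x1 * SV c))); last by lin_go.
under eq_sw => q D do (rewrite (antR hV (f := p (g D))); last by lin_go).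
under eq_sw => q D do rewrite R3r.
by rewrite (cuL hV (f := eV)) //; lin_go.
Qed.

Lemma V1t w x :
  sw DV w (fun w1 w2 => sw DV x (fun x1 n => sw DV n (fun m x4 =>
     p (g w1) x1 * th m * p (g w2) (SV x4)))) = eV w * th x.
Proof.
transitivity (sw DV x (fun y c => sw DV w (fun w1 w2 => sw DV y (fun y1 y2 => sw DV c (fun c1 c2 =>
     p (g w1) y1 * (p (g w2) (SV c2) * p (g y2) (SV c1))))))).
  rewrite sw_swap.
  transitivity (sw DV x (fun x1 n => sw DV n (fun m x4 => sw DV m (fun y2 c1 => sw DV w (fun w1 w2 =>
     p (g w1) x1 * (p (g w2) (SV x4) * p (g y2) (SV c1))))))).
    apply: eq_sw => x1 n; rewrite sw_swap; apply: eq_sw => m x4; rewrite /th.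
    under eq_sw => w1 w2 do rewrite sw_mulr sw_mull.
    rewrite sw_swap; apply: eq_sw => y2 c1; apply: eq_sw => w1 w2; ring.
  under eq_sw => x1 n do (rewrite (coas hV); last by lin_go).
  rewrite -(coas hV); last by lin_go.
  apply: eq_sw => y c.
  under eq_sw => y1 y2 do rewrite sw_swap.
  rewrite sw_swap; apply: eq_sw => w1 w2; by rewrite sw_swap.
under eq_sw => y c do rewrite -Ck.
transitivity (sw DV x (fun y c => sw DV y (fun y1 y2 => sw DV c (fun c1 c2 =>
     p (g y1) (SV c2) * p (g w) (y2 * SV c1))))).
  apply: eq_sw => y c.
  rewrite sw_swap; under eq_sw => y1 y2 do rewrite sw_swap.
  apply: eq_sw => y1 y2; apply: eq_sw => c1 c2.
  by rewrite R2 sw_mulr; apply: eq_sw => w1 w2; ring.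
rewrite (coas hV); last by lin_go.
under eq_sw => y1 z do (rewrite -(coas hV); last by lin_go).
under eq_sw => y1 z do under eq_sw => q c2 do
  (rewrite (antR hV (f := fun t => p (g y1) (SV c2) * p (g w) t)); last by lin_go).
under eq_sw => y1 z do
  (rewrite (cuL hV (f := fun t => p (g y1) (SV t) * p (g w) 1)); last by lin_go).
rewrite /th sw_mulr; apply: eq_sw => y1 z.
by rewrite R3r mulrC.
Qed.

Lemma Igt v x : sw DV x (fun x1 x2 => p (g (SV (SV v))) x1 * th x2) =
   sw DV x (fun x1 x2 => th x1 * p (g v) x2).
Proof.
symmetry.
transitivity (sw DV v (fun v1 VV => sw DV x (fun X Y => sw DV X (fun a1 m =>
   p (g (SV (SV v1))) a1 * th m * sw DV VV (fun v2 v4 => sw DV Y (fun a3 b =>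
      p (g (SV v2)) a3 * p (g v4) b)))))).
  rewrite -(cuL hV (f := fun t => sw DV x (fun a b => th a * p (g t) b)) v); last by lin_go.
  transitivity (sw DV v (fun v' v4 => sw DV x (fun a b =>
     sw DV (SV (SV v')) (fun w1 w2 => sw DV a (fun a1 n => sw DV n (fun m a3 =>
     p (g w1) a1 * th m * p (g w2) (SV a3)))) * p (g v4) b))).
    apply: eq_sw => v' v4; rewrite sw_mulr; apply: eq_sw => a b.
    by rewrite V1t (eS hV) (eS hV) mulrA.
  under eq_sw => v' v4 do under eq_sw => a b do
    ((rewrite (DS hV); last by lin_go); (rewrite (DS hV); last by lin_go)).
  under eq_sw => v' v4 do under eq_sw => a b do under eq_sw => v1 v2 do under eq_sw => a1 n do
    under eq_sw => m a3 do rewrite RSS.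
  under eq_sw => v' v4 do under eq_sw => a b do
    (rewrite sw_mull; under eq_sw => v1 v2 do
       (rewrite sw_mull; under eq_sw => a1 n do rewrite sw_mull)).
  under eq_sw => v' v4 do rewrite sw_swap.
  rewrite (coas hV); last by lin_go.
  apply: eq_sw => v1 VV.
  under eq_sw => v2 v4 do (rewrite (coas hV); last by lin_go).
  under eq_sw => v2 v4 do under eq_sw => a1 o do (rewrite (coas hV); last by lin_go).
  under eq_sw => v2 v4 do (rewrite -(coas hV); last by lin_go).
  rewrite sw_swap; apply: eq_sw => X Y.
  rewrite sw_swap.
  apply eq_sw; intros a1 m.
  rewrite [RHS]sw_mulr; apply eq_sw; intros v2 v4.
  rewrite [RHS]sw_mulr; apply eq_sw; intros a3 b.
  ring.
under eq_sw => v1 VV do under eq_sw => X Y do under eq_sw => a1 m do rewrite Rinner.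
transitivity (sw DV v (fun v1 VV => sw DV x (fun X Y => sw DV X (fun a1 m =>
   p (g (SV (SV v1))) a1 * th m) * eV Y) * eV VV)).
  apply: eq_sw => v1 VV; rewrite sw_mull; apply: eq_sw => X Y; rewrite sw_mull sw_mull.
  apply: eq_sw => a1 m; ring.
rewrite (cuR hV (f := fun t => sw DV x (fun X Y => sw DV X (fun a1 m =>
   p (g (SV (SV t))) a1 * th m) * eV Y))); last by lin_go.
by rewrite (cuR hV (f := fun t => sw DV t (fun a1 m => p (g (SV (SV v))) a1 * th m))) //; lin_go.
Qed.

Lemma HardI x : sw DV x (fun a b => thi a * th b) = eV x.
Proof.
rewrite /thi.
under eq_sw => a b do rewrite sw_mull.
rewrite (coas hV); last by lin_go.
under eq_sw => a1 z do rewrite Igt.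
rewrite /th.
under eq_sw => a1 z do under eq_sw => x1 x2 do rewrite sw_mull.
under eq_sw => a1 z do (rewrite (coas hV); last by lin_go).
rewrite -(coas hV); last by lin_go.
under eq_sw => W o do rewrite sw_swap.
under eq_sw => W o do under eq_sw => d x2 do (rewrite (_ : sw DV W _ = p (g W) (SV d * x2));
   [ | by rewrite R2]).
under eq_sw => W o do (rewrite (antL hV (f := p (g W))); last by lin_go).
under eq_sw => W o do rewrite R3r mulrC.
by rewrite (cuR hV (f := eV)) //; lin_go.
Qed.

Lemma FinII (f : U -> k) x : linf f ->
  f (g (SV (SV x))) = sw3 DV x (fun x1 x2 x3 => ups x1 * upsi x3 * f (g x2)).
Proof.
move=> hf; symmetry; rewrite /sw3.
transitivity (sw DV x (fun z c2 => sw DV z (fun a c1 => ups a * f (g c1)) * upsi c2)).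
  apply: eq_sw => z c2; rewrite sw_mull; apply: eq_sw => a c1; ring.
under eq_sw => z c2 do (rewrite (IntII (f := f)) //).
under eq_sw => z c2 do rewrite sw_mull.
rewrite (coas hV); last by lin_go.
transitivity (sw DV x (fun a o => f (g (SV (SV a))) * eV o)).
  apply: eq_sw => a o; rewrite -HardII sw_mulr; apply: eq_sw => c1 c2; ring.
by rewrite (cuR hV (f := fun t => f (g (SV (SV t))))) //; lin_go.
Qed.

Lemma FinI (f : U -> k) x : linf f ->
  f (g (SV (SV x))) = sw3 DV x (fun x1 x2 x3 => thi x1 * th x3 * f (g x2)).
Proof.
move=> hf.
rewrite -(cuL hV (f := fun t => f (g (SV (SV t))))); last by lin_go.
transitivity (sw DV x (fun a c => sw DV a (fun a1 a2 => thi a1 * th a2 * f (g (SV (SV c)))))).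
  by apply: eq_sw => a c; rewrite -sw_mull HardI.
rewrite (coas hV); last by lin_go.
transitivity (sw DV x (fun a1 z => thi a1 * sw DV z (fun a2 c => f (g a2) * th c))).
  apply: eq_sw => a1 z; rewrite -IntI // sw_mulr; apply: eq_sw => a2 c; ring.
under eq_sw => a1 z do rewrite sw_mulr.
rewrite /sw3 -(coas hV); last by lin_go.
by apply: eq_sw => n c; apply: eq_sw => a1 a2; ring.
Qed.
End Main.

Unset Implicit Arguments. Set Strict Implicit.
Theorem mainTheorem4 (k : fieldType) (U V : algType k)
  (DU : U -> seq (U * U)) (eU : U -> k) (SU SUi : U -> U)
  (DV : V -> seq (V * V)) (eV : V -> k) (SV SVi : V -> V)
  (p : U -> V -> k) (g : V -> U)
  (hU : is_hopf DU eU SU SUi) (hV : is_hopf DV eV SV SVi)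
  (hp : is_pairing DU eU DV eV p)
  (hg : is_hopf_map_cop DU eU SUi DV eV SV g)
  (hgm : forall (y : V) (m : U),
     g y * m = sw3 DU m (fun m1 m2 m3 => sw3 DV y (fun y1 y2 y3 =>
                 (p (SUi m1) y3 * p m3 y1) *: (m2 * g y2)))) :
  let th := fun x => sw DV x (fun x1 x2 => p (g x1) (SV x2)) in
  let thi := fun x => sw DV x (fun x1 x2 => p (g (SV (SV x1))) x2) in
  let ups := fun x => sw DV x (fun x1 x2 => p (g x2) (SV x1)) in
  let upsi := fun x => sw DV x (fun x1 x2 => p (g (SV (SV x2))) x1) in
  (* (i) *)
  ((forall x, sw DV x (fun x1 x2 => th x1 * thi x2) = eV x
           /\ sw DV x (fun x1 x2 => thi x1 * th x2) = eV x)
   /\ (forall x, g (SV (SV x)) = sw3 DV x (fun x1 x2 x3 => (thi x1 * th x3) *: g x2)))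
  /\
  (* (ii) *)
  ((forall x, sw DV x (fun x1 x2 => ups x1 * upsi x2) = eV x
           /\ sw DV x (fun x1 x2 => upsi x1 * ups x2) = eV x)
   /\ (forall x, g (SV (SV x)) = sw3 DV x (fun x1 x2 x3 => (ups x1 * upsi x3) *: g x2))).
Proof.
move=> th thi ups upsi.
split; split.
- move=> x; split.
  + exact: (EasyI hU hV hp hg hgm x).
  + exact: (HardI hU hV hp hg hgm x).
- move=> x; apply: separate => f hf.
  rewrite (FinI hU hV hp hg hgm x hf) /sw3 sw_lf //.
  apply: eq_sw => a x3; rewrite sw_lf //; apply: eq_sw => x1 x2.
  by rewrite linf_scale.
- move=> x; split.
  + exact: (HardII hU hV hp hg hgm x).
  + exact: (EasyII hU hV hp hg hgm x).
- move=> x; apply: separate => f hf.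
  rewrite (FinII hU hV hp hg hgm x hf) /sw3 sw_lf //.
  apply: eq_sw => a x3; rewrite sw_lf //; apply: eq_sw => x1 x2.
  by rewrite linf_scale.
Qed.
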